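(* For all integers $m\ge0$ and $k\ge0$, \[ \sum_{i=0}^{2k}(-1)^i\binom{m+k+i}{m+k-i}\binom{m+3k-i}{m-k+i}=(-1)^k\sum_{i=0}^{m}\binom{2k}{m-i}\binom{4k+i}{i}. \]
   Context: Binomial coefficients $\binom{a}{b}$ with integer $a\ge0$ are taken to be $0$ when $b<0$ or $b>a$. *)

(* Defs.v *)
From mathcomp Require Import all_boot all_order all_algebra.
Set Implicit Arguments. Unset Strict Implicit. Unset Printing Implicit Defensive.
Import Order.TTheory GRing.Theory Num.Theory.

Definition binz (a : nat) (b : int) : nat :=
  match b with
  | Posz n => 'C(a, n)
  | Negz _ => 0%N
  end.

(* Main.v *)
Require Import Defs.
From mathcomp Require Import all_boot all_order all_algebra.
From mathcomp Require Import zify ring.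
Import Order.TTheory GRing.Theory Num.Theory.
Local Open Scope ring_scope.


Lemma prod_rec (R : comNzRingType) (u v : nat -> R) (A B : R) :
  (forall n, u n.+2 = A * u n.+1 - u n) ->
  (forall n, v n.+2 = B * v n.+1 - v n) ->
  forall n, u n.+4 * v n.+4 = A * B * (u n.+3 * v n.+3)
     - (A ^+ 2 + B ^+ 2 - 2) * (u n.+2 * v n.+2) + A * B * (u n.+1 * v n.+1)
     - u n * v n.
Proof.
move=> hu hv n.
rewrite !(hu n.+2) !(hv n.+2) !(hu n.+1) !(hv n.+1) !(hu n) !(hv n).
ring.
Qed.

Definition P n : {poly int} := \poly_(a < n.+1) ('C(n + a, a.*2))%:R.
Definition Pm n : {poly int} := \poly_(a < n.+1) ((-1) ^+ a * ('C(n + a, a.*2))%:R).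

Lemma coefP n i : (P n)`_i = ('C(n + i, i.*2))%:R.
Proof.
rewrite coef_poly; case: ltnP => // h.
by rewrite bin_small //; lia.
Qed.

Lemma coefPm n i : (Pm n)`_i = (-1) ^+ i * ('C(n + i, i.*2))%:R.
Proof.
rewrite coef_poly; case: ltnP => // h.
by rewrite bin_small ?mulr0 //; lia.
Qed.

Lemma binid n a : ('C(n.+2 + a, a.*2) + 'C(n + a, a.*2) =
  2 * 'C(n.+1 + a, a.*2) + (if a is a'.+1 then 'C(n + a, a'.*2) else 0))%N.
Proof.
case: a => [|a]; first by rewrite !bin0.
rewrite doubleS !addnS !addSn !binS; lia.
Qed.

Lemma coefXpM (p : {poly int}) j :
  ((2 + 'X) * p)`_j = 2 * p`_j + (if j is j'.+1 then p`_j' else 0).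
Proof.
rewrite mulrDl coefD coefXM; congr (_ + _); last by case: j.
by rewrite !mulr_natl coefMn.
Qed.

Lemma coefXmM (p : {poly int}) j :
  ((2 - 'X) * p)`_j = 2 * p`_j - (if j is j'.+1 then p`_j' else 0).
Proof.
rewrite mulrBl coefB coefXM; congr (_ - _); last by case: j.
by rewrite !mulr_natl coefMn.
Qed.

Lemma P_rec n : P n.+2 = (2 + 'X) * P n.+1 - P n.
Proof.
apply/polyP => a; rewrite coefB coefXpM.
have := binid n a; case: a => [|a] /= h; rewrite !coefP !natz;
  rewrite ?addSn ?addnS ?bin0 in h *; lia.
Qed.

Lemma sign_aux (s x y z w : int) : x = 2 * y + z - w ->
  (- s) * x = 2 * ((- s) * y) - s * z - (- s) * w.
Proof. by move=> ->; ring. Qed.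

Lemma Pm_rec n : Pm n.+2 = (2 - 'X) * Pm n.+1 - Pm n.
Proof.
apply/polyP => a; rewrite coefB coefXmM.
have := binid n a; case: a => [|a] /= h; rewrite !coefPm !natz;
  rewrite ?addSn ?addnS ?bin0 in h *.
  rewrite !expr0 !mul1r; lia.
rewrite !exprS !mulN1r; apply: sign_aux; lia.
Qed.

Definition Q n := P n * Pm n.

Lemma Q_rec n : Q n.+4 = (4 - 'X^2) * Q n.+3 - (6 + 2 * 'X^2) * Q n.+2
   + (4 - 'X^2) * Q n.+1 - Q n.
Proof.
rewrite /Q (@prod_rec _ P Pm _ _ P_rec Pm_rec).
have -> : (2 + 'X) * (2 - 'X) = 4 - 'X^2 :> {poly int} by ring.
have -> : (2 + 'X) ^+ 2 + (2 - 'X) ^+ 2 - 2 = 6 + 2 * 'X^2 :> {poly int} by ring.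
by [].
Qed.

Definition e N i : int := ('C(N + i, i))%:Z.
Definition b M i : int := ('C(M, i))%:Z.
Definition cc N M m : int := \sum_(i < m.+1) e N i * b M (m - i)%N.
Definition ccz N M (z : int) : int := if z is Posz m then cc N M m else 0.

Lemma e_pascal N i : e N i.+1 = e N.+1 i.+1 - e N.+1 i.
Proof. rewrite /e !addnS !addSn (binS (N + i).+1); lia. Qed.

Lemma cc_recS N M m : cc N M m.+1 = cc N.+1 M m.+1 - cc N.+1 M m.
Proof.
rewrite /cc big_ord_recl [in X in X - _]big_ord_recl.
have -> : e N 0 = e N.+1 0 by rewrite /e !bin0.
rewrite -addrA; congr (_ + _).
rewrite -sumrB; apply: eq_bigr => i _.
by rewrite e_pascal mulrBl !lift0 subSS.
Qed.

Lemma cc_rec0 N M : cc N M 0 = cc N.+1 M 0.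
Proof. by rewrite /cc !big_ord1 /e !bin0. Qed.

Definition sh (v : nat -> int) j := if j is j'.+1 then v j' else 0.

Lemma conv_sh (u v : nat -> int) m :
  \sum_(i < m.+2) u i * sh v (m.+1 - i)%N = \sum_(i < m.+1) u i * v (m - i)%N.
Proof.
rewrite big_ord_recr /= subnn mulr0 addr0; apply: eq_bigr => i _.
by rewrite subSn //; case: i => /= i; rewrite ltnS.
Qed.

Lemma conv_sh0 (u v : nat -> int) : \sum_(i < 1) u i * sh v (0 - i)%N = 0.
Proof. by rewrite big_ord1 mulr0. Qed.

Lemma b_rec M j : b M.+2 j = b M j + 2 * sh (b M) j + sh (sh (b M)) j.
Proof.
case: j => [|[|j]] /=; rewrite /b ?bin0 ?bin1 ?binS; lia.
Qed.

Lemma cc_b0 N M : cc N M.+2 0 = cc N M 0.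
Proof. by rewrite /cc !big_ord1 /b !bin0. Qed.

Lemma cc_split N M m : cc N M.+2 m = cc N M m +
  2 * (\sum_(i < m.+1) e N i * sh (b M) (m - i)%N) +
  \sum_(i < m.+1) e N i * sh (sh (b M)) (m - i)%N.
Proof.
rewrite /cc mulr_sumr -!big_split /=; apply: eq_bigr => i _.
rewrite b_rec; ring.
Qed.

Lemma cc_b1 N M : cc N M.+2 1 = cc N M 1 + 2 * cc N M 0.
Proof.
by rewrite cc_split !conv_sh [X in _ + X = _]big_ord1 /= mulr0 addr0.
Qed.

Lemma cc_bS N M m : cc N M.+2 m.+2 = cc N M m.+2 + 2 * cc N M m.+1 + cc N M m.
Proof.
by rewrite cc_split !conv_sh.
Qed.

Lemma ccz_neg N M z : z < 0 -> ccz N M z = 0.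
Proof. by case: z. Qed.

Lemma ccz_rec N M z : ccz N M z = ccz N.+1 M z - ccz N.+1 M (z - 1).
Proof.
case: z => [[|m]|d].
- by rewrite (ccz_neg _ _ (_ - 1)) // subr0 /= cc_rec0.
- have -> : (Posz m.+1 - 1) = Posz m by lia.
  by rewrite /= cc_recS.
- by rewrite !ccz_neg //; lia.
Qed.

Lemma ccz_b N M z : ccz N M.+2 z = ccz N M z + 2 * ccz N M (z - 1) + ccz N M (z - 2).
Proof.
case: z => [[|[|m]]|d].
- rewrite (ccz_neg N M (_ - 1)) // (ccz_neg N M (_ - 2)) // /= cc_b0; lia.
- rewrite (ccz_neg N M (_ - 2)) //.
  have -> : (Posz 1 - 1) = Posz 0 by lia.
  by rewrite /= cc_b1 addr0.
- have -> : (Posz m.+2 - 1) = Posz m.+1 by lia.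
  have -> : (Posz m.+2 - 2) = Posz m by lia.
  by rewrite /= cc_bS.
- by rewrite !ccz_neg //; lia.
Qed.

Definition G N M z (i : nat) := ccz N M (z - i%:Z).

Lemma G_rec N M z i : G N M z i = G N.+1 M z i - G N.+1 M z i.+1.
Proof.
rewrite /G ccz_rec; congr (_ - ccz _ _ _); lia.
Qed.

Lemma G_b N M z i : G N M.+2 z i = G N M z i + 2 * G N M z i.+1 + G N M z i.+2.
Proof.
rewrite /G ccz_b; congr (_ + _ * ccz _ _ _ + ccz _ _ _); lia.
Qed.

Lemma G_main N M z :
  G N.+4 M.+2 z 0 - 4 * G N.+4 M.+2 z 1 + 6 * G N.+4 M.+2 z 2
  - 4 * G N.+4 M.+2 z 3 + G N.+4 M.+2 z 4
  = G N M z 0 + 2 * G N M z 1 + G N M z 2.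
Proof.
rewrite -G_b (G_rec N) !(G_rec N.+1) !(G_rec N.+2) !(G_rec N.+3).
lia.
Qed.

Definition cz k z := ccz (4 * k) (2 * k) z.
Definition r (n k : nat) : int := (-1) ^+ k * cz k (n%:Z - k%:Z).
Definition rc n j := if odd j then 0 else r n j./2.
Definition R n : {poly int} := \poly_(j < (2 * n).+1) rc n j.

Lemma r_big n k : (n < k)%N -> r n k = 0.
Proof. move=> h; rewrite /r /cz ccz_neg ?mulr0 //; lia. Qed.

Lemma coefR n j : (R n)`_j = rc n j.
Proof.
rewrite coef_poly; case: ltnP => // h.
rewrite /rc; case: ifP => // ho; rewrite r_big //.
have := odd_double_half j; rewrite ho -mul2n; lia.
Qed.

Lemma coefA (p : {poly int}) j :
  ((4 - 'X^2) * p)`_j = 4 * p`_j - (if (j < 2)%N then 0 else p`_(j - 2)%N).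
Proof.
rewrite mulrBl coefB coefXnM; congr (_ - _).
by rewrite !mulr_natl coefMn.
Qed.

Lemma coefB6 (p : {poly int}) j :
  ((6 + 2 * 'X^2) * p)`_j = 6 * p`_j + 2 * (if (j < 2)%N then 0 else p`_(j - 2)%N).
Proof.
rewrite mulrDl -mulrA coefD -coefXnM; congr (_ + _).
  by rewrite !mulr_natl coefMn.
by rewrite !mulr_natl coefMn.
Qed.

Lemma cc00 m : cc 0 0 m = 1.
Proof.
rewrite /cc big_ord_recr /= subnn /e /b !bin0 add0n binn mulr1 big1 ?add0r //.
move=> i _; rewrite bin0n; case: eqP => [h|]; last by rewrite mulr0.
by have := ltn_ord i; lia.
Qed.

Lemma r0 n : r n 0 = 1.
Proof. by rewrite /r /cz subr0 /= cc00 mul1r. Qed.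

Lemma rG n k z i : n%:Z - k%:Z = z - i%:Z -> r n k = (-1) ^+ k * G (4 * k) (2 * k) z i.
Proof. by move=> h; rewrite /r /cz /G h. Qed.

Lemma r_rec n k :
  r n.+4 k.+1 = 4 * r n.+3 k.+1 - r n.+3 k - (6 * r n.+2 k.+1 + 2 * r n.+2 k)
    + (4 * r n.+1 k.+1 - r n.+1 k) - r n k.+1.
Proof.
set z := n.+4%:Z - k.+1%:Z.
rewrite (@rG n.+4 k.+1 z 0) ?(@rG n.+3 k.+1 z 1) ?(@rG n.+2 k.+1 z 2)
  ?(@rG n.+1 k.+1 z 3) ?(@rG n k.+1 z 4) ?(@rG n.+3 k z 0) ?(@rG n.+2 k z 1)
  ?(@rG n.+1 k z 2); try by rewrite /z; lia.
have -> : (4 * k.+1 = (4 * k).+4)%N by lia.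
have -> : (2 * k.+1 = (2 * k).+2)%N by lia.
have hm := G_main (4 * k) (2 * k) z.
set s := (-1) ^+ k.
rewrite exprS mulN1r -/s.
set g0 := G _ _ z 0 in hm *.
have -> : g0 = G (4 * k) (2 * k) z 0 + 2 * G (4 * k) (2 * k) z 1 + G (4 * k) (2 * k) z 2
  + 4 * G (4 * k).+4 (2 * k).+2 z 1 - 6 * G (4 * k).+4 (2 * k).+2 z 2
  + 4 * G (4 * k).+4 (2 * k).+2 z 3 - G (4 * k).+4 (2 * k).+2 z 4 by lia.
ring.
Qed.

Lemma rc_even n k : rc n k.*2 = r n k.
Proof. by rewrite /rc odd_double doubleK. Qed.

Lemma rc_odd n k : rc n k.*2.+1 = 0.
Proof. by rewrite /rc /= odd_double. Qed.

Lemma rc_rec n j : rc n.+4 j = 4 * rc n.+3 j - (if (j < 2)%N then 0 else rc n.+3 (j - 2)%N)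
  - (6 * rc n.+2 j + 2 * (if (j < 2)%N then 0 else rc n.+2 (j - 2)%N))
  + (4 * rc n.+1 j - (if (j < 2)%N then 0 else rc n.+1 (j - 2)%N)) - rc n j.
Proof.
have [k [->|->]] : exists k, j = k.*2 \/ j = k.*2.+1.
  exists j./2; rewrite -{1 3}(odd_double_half j); case: odd; [right|left] => //.
- case: k => [|k].
    by rewrite /= !rc_even !r0.
  by rewrite doubleS /= !subSS !subn0 -doubleS !rc_even r_rec.
- case: k => [|k]; first by rewrite /= !rc_odd; lia.
  rewrite doubleS /= !subSS !subn0 -doubleS !rc_odd; lia.
Qed.

Lemma R_rec n : R n.+4 = (4 - 'X^2) * R n.+3 - (6 + 2 * 'X^2) * R n.+2
   + (4 - 'X^2) * R n.+1 - R n.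
Proof.
apply/polyP => j.
by rewrite coefB coefD coefB coefA coefB6 coefA !coefR rc_rec.
Qed.


Lemma rc_big n j : (2 * n < j)%N -> rc n j = 0.
Proof.
move=> h; rewrite /rc; case: ifP => // ho; rewrite r_big //.
have := odd_double_half j; rewrite ho -mul2n; lia.
Qed.

Lemma P0 : P 0 = 1.
Proof.
apply/polyP => j; rewrite coefP coef1; case: j => [|j] //=.
by rewrite bin_small //; lia.
Qed.

Lemma P1 : P 1 = 1 + 'X.
Proof.
apply/polyP => j; rewrite coefP coefD coef1 coefX; case: j => [|[|j]] //=.
by rewrite bin_small //; lia.
Qed.

Lemma Pm0 : Pm 0 = 1.
Proof.
apply/polyP => j; rewrite coefPm coef1; case: j => [|j] //=.
by rewrite bin_small ?mulr0 //; lia.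
Qed.

Lemma Pm1 : Pm 1 = 1 - 'X.
Proof.
apply/polyP => j; rewrite coefPm coefB coef1 coefX; case: j => [|[|j]] //=.
by rewrite bin_small ?mulr0 //; lia.
Qed.

Ltac crc := rewrite /rc /= /r /cz /ccz /= /cc ?big_ord_recr ?big_ord0 /=; vm_compute; reflexivity.

Lemma R0 : R 0 = 1.
Proof. apply/polyP => j; rewrite coefR coef1. case: j => [|j]; first by crc.
  rewrite rc_big //. Qed.
Lemma R1 : R 1 = 1 - 'X^2.
Proof.
apply/polyP => j; rewrite coefR !(coefB, coefD, coef1, coefXn, mulr_natl, coefMn).
do 3 (case: j => [|j]; first by crc).
rewrite rc_big //=; lia.
Qed.
Lemma R2 : R 2 = 1 - 7 * 'X^2 + 'X^4.
Proof.
apply/polyP => j; rewrite coefR !(coefB, coefD, coef1, coefXn, mulr_natl, coefMn).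
do 5 (case: j => [|j]; first by crc).
rewrite rc_big //=; lia.
Qed.
Lemma R3 : R 3 = 1 - 26 * 'X^2 + 13 * 'X^4 - 'X^6.
Proof.
apply/polyP => j; rewrite coefR !(coefB, coefD, coef1, coefXn, mulr_natl, coefMn).
do 7 (case: j => [|j]; first by crc).
rewrite rc_big //=; lia.
Qed.

Lemma QR m : Q m = R m.
Proof.
have H : forall n, [/\ Q n = R n, Q n.+1 = R n.+1, Q n.+2 = R n.+2 & Q n.+3 = R n.+3].
  elim => [|n [h0 h1 h2 h3]].
    rewrite /Q !P_rec !Pm_rec P1 P0 Pm1 Pm0 R1 R2 R3 R0.
    split; ring.
  split; [exact: h1|exact: h2|exact: h3|].
  by rewrite Q_rec R_rec h0 h1 h2 h3.
by case: (H m).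
Qed.


Lemma coefQ n j : (Q n)`_j = \sum_(i < j.+1) ('C(n + i, i.*2))%:R * ((-1) ^+ (j - i)%N * ('C(n + (j - i), (j - i).*2))%:R).
Proof. by rewrite /Q coefM; apply: eq_bigr => i _; rewrite coefP coefPm. Qed.



Lemma binz_sub c a b : binz c (a%:Z - b%:Z) = if (b <= a)%N then 'C(c, a - b) else 0%N.
Proof.
case: leqP => h; first by rewrite subzn.
have -> : a%:Z - b%:Z = Negz (b - a).-1 by rewrite NegzE; lia.
by [].
Qed.

Lemma term1 m k i : binz (m + k + i) ((m + k)%:Z - i%:Z) = 'C(m + k + i, i.*2).
Proof.
rewrite binz_sub; case: leqP => h.
  have -> : (m + k - i = (m + k + i) - i.*2)%N by rewrite -addnn; lia.
  by rewrite bin_sub //; rewrite -addnn; lia.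
by rewrite bin_small //; rewrite -addnn; lia.
Qed.

Lemma term2 m k i : (i <= 2 * k)%N ->
  binz (m + 3 * k - i) (m%:Z - k%:Z + i%:Z) = 'C(m + k + (2 * k - i), (2 * k - i).*2).
Proof.
move=> hi.
have -> : m%:Z - k%:Z + i%:Z = (m + i)%:Z - k%:Z by lia.
have -> : (m + k + (2 * k - i) = m + 3 * k - i)%N by lia.
rewrite binz_sub; case: leqP => h.
  have -> : (m + i - k = (m + 3 * k - i) - (2 * k - i).*2)%N by rewrite -addnn; lia.
  by rewrite bin_sub //; rewrite -addnn; lia.
by rewrite bin_small //; rewrite -addnn; lia.
Qed.

Lemma sign2 k i : (i <= 2 * k)%N -> (-1) ^+ (2 * k - i)%N = (-1) ^+ i :> int.
Proof.
move=> h; rewrite -signr_odd oddB // mul2n odd_double /= signr_odd.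
by [].
Qed.


Theorem mainTheorem11 (m k : nat) :
  \sum_(0 <= i < (2 * k).+1)
     (-1) ^+ i * ((binz (m + k + i) ((m + k)%:Z - i%:Z))%:Z
                  * (binz (m + 3 * k - i) (m%:Z - k%:Z + i%:Z))%:Z)
  = (-1) ^+ k * (\sum_(0 <= i < m.+1)
                   ('C(2 * k, m - i) * 'C(4 * k + i, i))%N)%:Z :> int.
Proof.
have key := congr1 (fun p : {poly int} => p`_(k.*2)) (QR (m + k)).
rewrite /= coefQ coefR rc_even -mul2n in key.
have -> : (\sum_(0 <= i < m.+1) ('C(2 * k, m - i) * 'C(4 * k + i, i))%N)%:Z = cc (4 * k) (2 * k) m.
  rewrite -natz natr_sum big_mkord /cc; apply: eq_bigr => i _.
  by rewrite natrM !natz mulrC.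
have -> : (-1) ^+ k * cc (4 * k) (2 * k) m = r (m + k) k.
  rewrite /r /cz /=; have -> : ((m + k)%:Z - k%:Z) = m by lia. by [].
rewrite big_mkord -key; apply: eq_bigr => [[i hi]] _ /=.
have hi' : (i <= 2 * k)%N by rewrite -ltnS.
rewrite term1 term2 // sign2 // !natz; ring.
Qed.
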